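(* Assume $\Delta=0$. Let $\lambda_1,\lambda_2,\lambda_3\in K$ with $\lambda_ic_i\in N$ and $s_i':=s_i\nu_i$ where $\nu_i\in N$ corresponds to $\lambda_ic_i$. Then $s_1's_2'$ has order exactly $p$, $s_1's_3'$ has order exactly $q$, and $s_2's_3'$ has order exactly $r$.
   Context: Setting. Let $p,q,r\ge 3$ be integers and $W=W(p,q,r)$ the Coxeter group with generators $s_1,s_2,s_3$ and relations $s_i^2=1$, $(s_1s_2)^p=(s_1s_3)^q=(s_2s_3)^r=1$. Let $\alpha=4\cos^2(\pi k_1/p)$, $\beta=4\cos^2(\pi k_2/q)$, $\gamma=4\cos^2(\pi k_3/r)$ with $\gcd(k_1,p)=\gcd(k_2,q)=\gcd(k_3,r)=1$ (so $0<\alpha,\beta,\gamma<4$), and let $l,m\in\mathbb{C}$ with $lm=\gamma$. Let $K\subset\mathbb{C}$ be a field containing $\alpha,\beta,\gamma,l,m$, and $M$ a $3$-dimensional $K$-vector space with basis $(a_1,a_2,a_3)$. The reflection representation $R:W\to GL(M)$ with parameters $(\alpha,\beta,\gamma;l,m)$ is defined by: for $x=\lambda_1a_1+\lambda_2a_2+\lambda_3a_3$, $R(s_1)x=x-(2\lambda_1-\alpha\lambda_2-\beta\lambda_3)a_1$, $R(s_2)x=x-(-\lambda_1+2\lambda_2-l\lambda_3)a_2$, $R(s_3)x=x-(-\lambda_1-m\lambda_2+2\lambda_3)a_3$. Put $G=R(W)$ and write $s_i$ for $R(s_i)$ (then $s_1s_2,s_1s_3,s_2s_3$ have orders exactly $p,q,r$).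 Let $\Delta=8-2\alpha-2\beta-2\gamma-(\alpha l+\beta m)$; $R$ is reducible iff $\Delta=0$. Reducible setting. Assume $\Delta=0$. Put $b=(4-\gamma)a_1+(l+2)a_2+(m+2)a_3$; then the space of $G$-fixed vectors is $C_M(G)=Kb$ and $(b,a_2,a_3)$ is a basis of $M$. Let $N=N(G)$ be the subgroup of elements of $G$ acting trivially on $M/C_M(G)$. Each $\zeta\in N$ satisfies $\zeta(b)=b$, $\zeta(a_2)=a_2+\lambda b$, $\zeta(a_3)=a_3+\mu b$ for a unique $(\lambda,\mu)\in K^2$; the map $\zeta\mapsto(\lambda,\mu)$ is an injective group homomorphism $N\to (K^2,+)$, through which $N$ is identified with an additive subgroup of $K^2$ (and written additively). Put $c_1=(\alpha,\beta)$, $c_2=(-2,l)$, $c_3=(m,-2)\in K^2$. *)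

(* Defs.v *)
From HB Require Import structures.
From mathcomp Require Import all_boot all_order all_algebra.
Set Implicit Arguments. Unset Strict Implicit. Unset Printing Implicit Defensive.
Import Order.TTheory GRing.Theory Num.Theory.
Local Open Scope ring_scope.

Section Defs.
Variable C : numClosedFieldType.

(* 4 cos^2 (pi k / p), computed as (w^k + w^-k)^2 with w = p.-root (-1) = e^{i pi/p}. *)
Definition four_cos2 (k p : nat) : C :=
  let w := p.-root (-1 : C) in (w ^+ k + (w ^+ k)^-1) ^+ 2.

Definition vec3 (x1 x2 x3 : C) : 'cV[C]_3 := \col_i [:: x1; x2; x3]`_i.
Definition row3 (x1 x2 x3 : C) : 'rV[C]_3 := \row_j [:: x1; x2; x3]`_j.

Definition a1 : 'cV[C]_3 := vec3 1 0 0.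
Definition a2 : 'cV[C]_3 := vec3 0 1 0.
Definition a3 : 'cV[C]_3 := vec3 0 0 1.

(* Reflection matrices (acting on column vectors): R(s_i) x = x - f_i(x) a_i *)
Definition refl1 (alpha beta : C) : 'M[C]_3 :=
  1%:M - a1 *m row3 2 (- alpha) (- beta).
Definition refl2 (l : C) : 'M[C]_3 :=
  1%:M - a2 *m row3 (-1) 2 (- l).
Definition refl3 (m : C) : 'M[C]_3 :=
  1%:M - a3 *m row3 (-1) (- m) 2.

Definition refl (alpha beta l m : C) (i : 'I_3) : 'M[C]_3 :=
  match val i with 0%N => refl1 alpha beta | 1%N => refl2 l | _ => refl3 m end.

Inductive inG (alpha beta l m : C) : 'M[C]_3 -> Prop :=
| inG1 : inG alpha beta l m 1%:M
| inGs (i : 'I_3) (g : 'M[C]_3) :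
    inG alpha beta l m g -> inG alpha beta l m (refl alpha beta l m i *m g).

Definition Delta (alpha beta gamma l m : C) : C :=
  8 - 2 * alpha - 2 * beta - 2 * gamma - (alpha * l + beta * m).

Definition bvec (gamma l m : C) : 'cV[C]_3 := vec3 (4 - gamma) (l + 2) (m + 2).

Definition corresponds (gamma l m : C) (nu : 'M[C]_3) (v : C * C) : Prop :=
  let b := bvec gamma l m in
  [/\ nu *m b = b, nu *m a2 = a2 + v.1 *: b & nu *m a3 = a3 + v.2 *: b].

Definition in_N (alpha beta gamma l m : C) (nu : 'M[C]_3) (v : C * C) : Prop :=
  inG alpha beta l m nu /\ corresponds gamma l m nu v.

Definition has_order (g : 'M[C]_3) (n : nat) : Prop :=
  (0 < n)%N /\ g ^+ n = 1 /\ forall k : nat, (0 < k < n)%N -> g ^+ k <> 1.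

Definition scal2 (t : C) (v : C * C) : C * C := (t * v.1, t * v.2).
End Defs.

(* Main.v *)
Require Import Defs.
From HB Require Import structures.
From mathcomp Require Import all_boot all_order all_algebra.
From mathcomp Require Import ring lra.
Set Implicit Arguments. Unset Strict Implicit. Unset Printing Implicit Defensive.
Import Order.TTheory GRing.Theory Num.Theory.
Local Open Scope ring_scope.

Section RealSub.
Variable C : numClosedFieldType.
Definition RC := {x : C | x \is Num.real}.
HB.instance Definition _ := [isSub for (@sval C _ : RC -> C)].
HB.instance Definition _ := [Choice of RC by <:].
HB.instance Definition _ := [SubChoice_isSubIntegralDomain of RC by <:].
HB.instance Definition _ := [SubIntegralDomain_isSubField of RC by <:].

Definition RCle (x y : RC) := (val x <= val y).
Definition RClt (x y : RC) := (val x < val y).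
Definition RCnorm (x : RC) : RC := if RCle 0 x then x else - x.

Lemma RC_le0_add x y : RCle 0 x -> RCle 0 y -> RCle 0 (x + y).
Proof. rewrite /RCle /= => hx hy; exact: addr_ge0. Qed.
Lemma RC_le0_mul x y : RCle 0 x -> RCle 0 y -> RCle 0 (x * y).
Proof. rewrite /RCle /= => hx hy; exact: mulr_ge0. Qed.
Lemma RC_le0_anti x : RCle 0 x -> RCle x 0 -> x = 0.
Proof. rewrite /RCle /= => h1 h2; apply: val_inj => /=; by apply/eqP; rewrite eq_le h1 h2. Qed.
Lemma RC_sub_ge0 x y : RCle 0 (y - x) = RCle x y.
Proof. by rewrite /RCle /= subr_ge0. Qed.
Lemma RC_le0_total x : RCle 0 x || RCle x 0.
Proof. rewrite /RCle /=; case: x => x /= hx; by rewrite -realE. Qed.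
Lemma RC_normN x : RCnorm (- x) = RCnorm x.
Proof.
rewrite /RCnorm /RCle /= oppr_ge0.
have hx : val x \is Num.real := valP x.
case: (real_ltgtP hx (real0 _)) => h.
- by [].
- by rewrite opprK.
- have -> : x = 0 by apply: val_inj.
  by rewrite oppr0.
Qed.
Lemma RC_ge0_norm x : RCle 0 x -> RCnorm x = x.
Proof. by rewrite /RCnorm => ->. Qed.
Lemma RC_lt_def x y : RClt x y = (y != x) && RCle x y.
Proof. by rewrite /RClt /RCle lt_def (inj_eq val_inj). Qed.

HB.instance Definition _ := Num.IntegralDomain_isLeReal.Build RC
  RC_le0_add RC_le0_mul RC_le0_anti RC_sub_ge0 RC_le0_total RC_normN RC_ge0_norm RC_lt_def.


End RealSub.

Section F.
Variable R : realFieldType.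
Lemma F2 (a b c s : R) : a^+2+b^+2 = 1 -> c^+2+s^+2 = 1 -> 0 < s -> 0 < b -> c < a -> c < c*a + s*b.
Proof.
move=> h1 h2 hs hb hca.
case: (lerP 0 c) => hc.
- have hbs : b < s by nra.
  have hc1 : c <= 1 by nra.
  have e1 : c * b < s * (1 + a) by nra.
  have e2 : c * b^+2 < s * b * (1 + a) by nra.
  have e3 : c * (1 - a) * (1 + a) < s * b * (1 + a) by nra.
  have ha : 0 < 1 + a by nra.
  have e4 : c * (1 - a) < s * b.
    by rewrite -(ltr_pM2r ha).
  nra.
- have ha1 : a <= 1 by nra.
  have e1 : 0 <= c * (a - 1) by nra.
  have e2 : 0 < s * b by nra.
  nra.
Qed.
Lemma F1 (a b c s : R) : a^+2+b^+2 = 1 -> c^+2+s^+2 = 1 -> 0 < s -> 0 <= b -> b*c - a*s < 0 ->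
  (a = 1 /\ b = 0) \/ (c < a /\ 0 < b).
Proof.
move=> h1 h2 hs hb h.
have hca : c < a.
  case: (lerP 0 c) => hc.
  - case: (ltrP c a) => // hac.
    exfalso.
    have e1 : a * s <= c * s by rewrite ler_pM2r.
    have e2 : c * b < c * s by lra.
    have hc0 : 0 < c.
      case: (ltrP 0 c) => // hc'. have c0 : c = 0 by apply/eqP; rewrite eq_le hc hc'.
      by move: e2; rewrite c0 !mul0r ltxx.
    have hbs : b < s by rewrite -(ltr_pM2l hc0).
    have e3 : c^+2 < a^+2 by nra.
    have e4 : a < - c by nra.
    nra.
  - case: (ltrP c a) => // hac.
    exfalso.
    have e3 : c^+2 <= a^+2 by nra.
    have hbs : b <= s by nra.
    have e1 : a * s <= c * s by rewrite ler_pM2r.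
    have e2 : c * s <= c * b by nra.
    nra.
case: (ltrP 0 b) => hb'; first by right.
left.
have b0 : b = 0 by apply/eqP; rewrite eq_le hb' hb.
split => //.
have hc1 : -1 <= c by nra.
have ha : 0 < a + 1 by lra.
have ha2 : a^+2 = 1 by move: h1; rewrite b0 expr0n addr0.
move/eqP: ha2; rewrite sqrf_eq1 => /orP[/eqP // | /eqP e].
by move: ha; rewrite e addNr ltxx.
Qed.
End F.

Lemma dIVT (P : nat -> bool) a b : (a <= b)%N -> P a -> ~~ P b ->
  exists k, [/\ (a <= k)%N, (k < b)%N, P k & ~~ P k.+1].
Proof.
elim: b => [|b IH] hab Pa Pb.
  by move: hab; rewrite leqn0 => /eqP ha; move: Pb; rewrite -ha Pa.
case: (boolP (P b)) => Pb'.
  exists b; split => //.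
  rewrite leq_eqVlt in hab; case/orP: hab => [/eqP ha|]; last by [].
  by move: Pb; rewrite -ha Pa.
have hab' : (a <= b)%N.
  rewrite leq_eqVlt in hab; case/orP: hab => [/eqP ha|]; last by [].
  by move: Pb; rewrite -ha Pa.
have [k [h1 h2 h3 h4]] := IH hab' Pa Pb'.
by exists k; split => //; rewrite ltnS ltnW.
Qed.

Lemma alt_sum (R : comPzRingType) (x : R) e :
  (x + 1) * \sum_(i < e) (-1)^+i * x^+i = 1 - (-1)^+e * x^+e.
Proof.
elim: e => [|e IH]; first by rewrite big_ord0 mulr0 !expr0 mulr1 subrr.
rewrite big_ord_recr /= mulrDr IH !exprS; ring.
Qed.

Section Prim.
Variable C : numClosedFieldType.
Lemma RC_ltE (x y : RC C) : (x < y) = (val x < val y). Proof. by []. Qed.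
Lemma RC_leE (x y : RC C) : (x <= y) = (val x <= val y). Proof. by []. Qed.
Definition re (z : C) : RC C := exist _ ('Re z) (Creal_Re z).
Definition im (z : C) : RC C := exist _ ('Im z) (Creal_Im z).

Lemma circ_re (y : C) : `|y| = 1 -> re y ^+ 2 + im y ^+ 2 = 1.
Proof.
move=> hy; apply: val_inj; rewrite !(rmorphD, rmorphXn, rmorph1) /=.
by rewrite -normC2_Re_Im hy expr1n.
Qed.

Lemma rootN1_prim (n : nat) : (1 < n)%N -> (2 * n)%N.-primitive_root (n.-root (-1 : C)).
Proof.
move=> n1; have n0 : (0 < n)%N by apply: ltn_trans n1.
set w := n.-root (-1 : C).
have hwn : w ^+ n = -1 := rootCK n0 (-1).
have unitS : forall y : C, y ^+ n = -1 -> `|y| = 1.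
  move=> y hy; have : `|y| ^+ n = 1 by rewrite -normrX hy normrN1.
  by move/eqP; rewrite pexpr_eq1 // => /eqP.
have hw1 : `|w| = 1 := unitS w hwn.
have inv_conj : forall y : C, `|y| = 1 -> y^-1 = y^*.
  by move=> y hy; rewrite invC_norm hy expr1n invr1 mul1r.
have maxRe : forall y, y ^+ n = -1 -> 'Re y <= 'Re w.
  move=> y hy; case: (boolP (0 <= 'Im y)) => hi; first exact: rootC_Re_max.
  have hy' : (y^*) ^+ n = -1 by rewrite -rmorphXn hy rmorphN1.
  rewrite -Re_conj; apply: rootC_Re_max => //.
  rewrite Im_conj oppr_ge0; move: hi; rewrite -real_ltNge ?real0 ?Creal_Im //.
  exact: ltW.
have imw : 0 <= 'Im w := Im_rootC_ge0 _ n1.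
have Rw := circ_re hw1.
have LS : forall y, y ^+ n = -1 -> exists2 i, odd i & y = w ^+ i.
  move=> y hy; have hy1 := unitS y hy; have Ry := circ_re hy1.
  case: (boolP ('Im w == 0)) => [/eqP iw0 | iw0].
  - have hiw : im w = 0 by apply: val_inj.
    have hRw : 'Re w = 1 \/ 'Re w = -1.
      rewrite hiw expr0n addr0 in Rw; move/eqP: Rw; rewrite sqrf_eq1.
      case/orP => /eqP h; [left | right]; by move: (congr1 val h).
    have wre : w = 'Re w by rewrite {1}[w]Crect iw0 mulr0 addr0.
    case: hRw => hRw.
      move: hwn; rewrite wre hRw expr1n => /eqP; rewrite -subr_eq0 opprK.
      by rewrite (_ : 1 + 1 = 2%:R) // pnatr_eq0.
    exists 1%N => //; rewrite expr1.
    have hy2 : re y <= -1 by move: (maxRe y hy); rewrite hRw.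
    have [hr hi] : re y = -1 /\ im y = 0.
      have hb0 : im y ^+ 2 <= 0 by nra.
      have hb : im y = 0 by nra.
      by split => //; nra.
    have hry : 'Re y = -1 by move: (congr1 val hr); rewrite /= ?rmorphN1.
    have hiy : 'Im y = 0 by move: (congr1 val hi).
    by rewrite [y]Crect [w]Crect iw0 hRw hry hiy.
  - have iwp : 0 < 'Im w by rewrite lt_def iw0.
    set s := fun k : nat => y * (w^-1) ^+ k.
    have winv := inv_conj w hw1.
    have hsS : forall k, s k.+1 = s k * w^*.
      by move=> k; rewrite /s exprSr mulrA winv.
    have hwin : (w^-1) ^+ n = -1 by rewrite exprVn hwn invrN1.
    have hsn : forall k, s (k + n) = - s k.
      by move=> k; rewrite /s exprD hwin mulrA mulrN1.
    have hsu : forall k, `|s k| = 1.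
      by move=> k; rewrite /s normrM normrX normfV hw1 invr1 expr1n hy1 mulr1.
    have ImS : forall k, 'Im (s k.+1) = 'Re w * 'Im (s k) - 'Re (s k) * 'Im w.
      by move=> k; rewrite hsS ImM Re_conj Im_conj mulrN addrC.
    have ImN : forall k, 'Im (s (k + n)) = - 'Im (s k).
      by move=> k; rewrite hsn raddfN.
    have skn : forall k, (s k) ^+ n = - (-1) ^+ k.
      by move=> k; rewrite /s exprMn hy -exprM mulnC exprM hwin mulN1r.
    have [a [b [hab Pa Pb]]] : exists a b, [/\ (a <= b)%N, 0 <= 'Im (s a) & 'Im (s b) < 0].
      have ImN0 := ImN 0%N; rewrite ?add0n in ImN0.
      case: (real_ltgtP (Creal_Im (s 0)) (real0 C)) => h0.
      - exists n, (n + n)%N; split; first by rewrite leq_addl.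
          by rewrite ImN0 oppr_ge0 ltW.
        by rewrite ImN ImN0 opprK.
      - exists 0%N, n; split => //; first exact: ltW.
        by rewrite ImN0 oppr_lt0.
      - have ImN1 := ImN 1%N; rewrite ?add1n in ImN1.
        have hs1 : 'Im (s 1) = - ('Re (s 0) * 'Im w) by rewrite ImS h0 mulr0 sub0r.
        have Rs0 := circ_re (hsu 0%N).
        have re0 : 'Re (s 0) != 0.
          apply/eqP => hr0.
          have : re (s 0) ^+ 2 + im (s 0) ^+ 2 = 0.
            by apply: val_inj; rewrite !(rmorphD, rmorphXn) /= hr0 h0 expr0n addr0.
          by rewrite Rs0 => /eqP; rewrite oner_eq0.
        have i1 : 'Im (s 1) != 0 by rewrite hs1 oppr_eq0 mulf_neq0.
        case: (real_ltgtP (Creal_Im (s 1)) (real0 C)) => h1.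
        + exists 0%N, 1%N; split => //; by rewrite h0.
        + exists 1%N, (n.+1)%N; split => //; [exact: ltW | by rewrite ImN1 oppr_lt0].
        + by move: i1; rewrite h1 eqxx.
    have [k [_ _ Pk Pk1]] := dIVT (P := fun k => 0 <= 'Im (s k)) hab Pa (negbT (lt_geF Pb)).
    have Pk1' : 'Im (s k.+1) < 0 by rewrite real_ltNge ?Creal_Im ?real0.
    have h' : im (s k) * re w - re (s k) * im w < 0.
      by rewrite RC_ltE !(rmorphB, rmorphM, rmorph0) /= mulrC -ImS.
    have iwp' : 0 < im w by rewrite RC_ltE rmorph0.
    have Pk' : 0 <= im (s k) by rewrite RC_leE rmorph0.
    case: (F1 (circ_re (hsu k)) Rw iwp' Pk' h') => [[hr hi] | [hr hi]].
    + have sk1 : s k = 1.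
        have hry : 'Re (s k) = 1 by move: (congr1 val hr); rewrite /= ?rmorph1.
        have hiy : 'Im (s k) = 0 by move: (congr1 val hi).
        by rewrite [s k]Crect hry hiy mulr0 addr0.
      have wk0 : w ^+ k != 0 by rewrite expf_neq0 // -normr_eq0 hw1 oner_eq0.
      have yk : y = w ^+ k.
        by rewrite -[y]mulr1 -(mulVf wk0) -exprVn mulrA -/(s k) sk1 mul1r.
      case ok: (odd k); first by exists k.
      move: (skn k); rewrite sk1 expr1n -signr_odd ok expr0 => /eqP.
      by rewrite -subr_eq0 opprK (_ : 1 + 1 = 2%:R) // pnatr_eq0.
    + have hr' : 'Re w < 'Re (s k) by move: hr; rewrite RC_ltE.
      have hi' : 0 < 'Im (s k) by move: hi; rewrite RC_ltE rmorph0.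
      case ok: (odd k).
      * set z := w * (s k)^*.
        have zn : z ^+ n = -1.
          by rewrite /z exprMn -rmorphXn skn -signr_odd ok expr1 opprK rmorph1 mulr1.
        have := maxRe z zn.
        have hF2 := F2 (circ_re (hsu k)) Rw iwp' hi hr.
        rewrite RC_ltE !(rmorphD, rmorphM) /= in hF2.
        rewrite /z ReM Re_conj Im_conj mulrN opprK.
        by move=> hle; move: (lt_le_trans hF2 hle); rewrite ltxx.
      * have := maxRe (s k); rewrite skn -signr_odd ok expr0 => /(_ erefl).
        by move=> hle; move: (lt_le_trans hr' hle); rewrite ltxx.
have hN1 : (-1 : C) != 1.
  by rewrite -subr_eq0 -opprD oppr_eq0 (_ : 1 + 1 = 2%:R) // pnatr_eq0.
have n2 : (0 < 2 * n)%N by rewrite muln_gt0.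
have w2n : w ^+ (2 * n)%N = 1 by rewrite mulnC exprM hwn sqrrN expr1n.
have [d pd dd] := prim_order_exists n2 w2n.
have d0 := prim_order_gt0 pd.
case: (eqVneq d (2 * n)%N) => [<- // | dne].
exfalso.
have ndn : ~~ (d %| n)%N by rewrite (prim_order_dvd pd) hwn.
have de : ~~ odd d.
  apply/negP => od; move: ndn; rewrite -(Gauss_dvdr _ (_ : coprime d 2)) ?dd //.
  by rewrite coprimen2.
set m := d./2.
have dm : d = (2 * m)%N by rewrite -[LHS]odd_double_half (negbTE de) add0n mul2n.
have m0 : (0 < m)%N by move: d0; rewrite dm muln_gt0.
have wm : w ^+ m = -1.
  have : (w ^+ m) ^+ 2 == 1 by rewrite -exprM mulnC -dm (prim_expr_order pd).
  rewrite sqrf_eq1 => /orP[/eqP h1|/eqP //].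
  move: (prim_order_dvd pd m); rewrite h1 eqxx => /dvdn_leq => /(_ m0).
  by rewrite dm -{2}(mul1n m) leq_pmul2r // .
have mn : (m %| n)%N by move: dd; rewrite dm dvdn_pmul2l.
set e := (n %/ m)%N.
have ne : n = (m * e)%N by rewrite /e mulnC divnK.
have oe : odd e.
  apply/negPn/negP => ee.
  have : (2 * m %| m * e)%N.
    by rewrite -[e]odd_double_half (negbTE ee) add0n -mul2n mulnCA mulnA dvdn_mulr.
  by rewrite -ne -dm (negbTE ndn).
have e1 : e != 1%N by apply: contra dne => /eqP e1; rewrite dm ne e1 muln1.
have e0 : (0 < e)%N by move: oe; case: (e).
have e2 : (1 < e)%N by rewrite ltn_neqAle eq_sym e1 e0.
have allm : forall y : C, y ^+ n = -1 -> y ^+ m = -1.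
  move=> y hy; have [i oi ->] := LS y hy.
  by rewrite -exprM mulnC exprM wm -signr_odd oi expr1.
pose Q := \poly_(i < e) ((-1) ^+ i : C).
have sQ : size Q = e.
  by rewrite size_poly_eq // -(subnKC (ltnW e2)) /= signr_eq0.
have [s0 rs0] : exists s0, root Q s0.
  by apply/closed_rootP; rewrite sQ.
have hQ : forall x, Q.[x] = \sum_(i < e) (-1) ^+ i * x ^+ i.
  by move=> x; rewrite horner_poly.
set r := m.-root s0.
have rm : r ^+ m = s0 := rootCK m0 s0.
have rn : r ^+ n = -1.
  have := alt_sum s0 e; rewrite -hQ (eqP rs0) mulr0 -signr_odd oe expr1 mulN1r.
  move=> h; rewrite ne exprM rm; apply/eqP; rewrite -subr_eq0; apply/eqP.
  rewrite [RHS]h; ring.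
have s0N1 : s0 = -1 by rewrite -rm allm.
move: rs0; rewrite /root hQ s0N1.
have -> : \sum_(i < e) (-1) ^+ i * (-1 : C) ^+ i = \sum_(i < e) (1 : C).
  by apply: eq_bigr => i _; rewrite -exprMn mulrNN mulr1 expr1n.
by rewrite sumr_const card_ord pnatr_eq0 -[e == 0%N]negbK -lt0n e0.
Qed.
End Prim.


Section MX3.
Variable C : numClosedFieldType.

Definition mx3 (a b c d e f g h i : C) : 'M[C]_3 :=
  \matrix_(i0 < 3, j0 < 3) nth 0 (nth [::] [:: [:: a; b; c]; [:: d; e; f]; [:: g; h; i]] i0) j0.

Lemma mx3_mul a b c d e f g h i a' b' c' d' e' f' g' h' i' :
  mx3 a b c d e f g h i *m mx3 a' b' c' d' e' f' g' h' i' =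
  mx3 (a*a' + b*d' + c*g') (a*b' + b*e' + c*h') (a*c' + b*f' + c*i')
      (d*a' + e*d' + f*g') (d*b' + e*e' + f*h') (d*c' + e*f' + f*i')
      (g*a' + h*d' + i*g') (g*b' + h*e' + i*h') (g*c' + h*f' + i*i').
Proof.
apply/matrixP => i0 j0; rewrite !mxE !big_ord_recr big_ord0 /= !mxE.
case: i0 => [[|[|[|i0]]] Hi] //; case: j0 => [[|[|[|j0]]] Hj] //=; ring.
Qed.

Lemma mx3_add a b c d e f g h i a' b' c' d' e' f' g' h' i' :
  mx3 a b c d e f g h i + mx3 a' b' c' d' e' f' g' h' i' =
  mx3 (a+a') (b+b') (c+c') (d+d') (e+e') (f+f') (g+g') (h+h') (i+i').
Proof.
apply/matrixP => i0 j0; rewrite !mxE.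
by case: i0 => [[|[|[|i0]]] Hi] //; case: j0 => [[|[|[|j0]]] Hj].
Qed.

Lemma mx3_opp a b c d e f g h i :
  - mx3 a b c d e f g h i = mx3 (-a) (-b) (-c) (-d) (-e) (-f) (-g) (-h) (-i).
Proof.
apply/matrixP => i0 j0; rewrite !mxE.
by case: i0 => [[|[|[|i0]]] Hi] //; case: j0 => [[|[|[|j0]]] Hj].
Qed.

Lemma mx3_scalar x : x%:M = mx3 x 0 0 0 x 0 0 0 x.
Proof.
apply/matrixP => i0 j0; rewrite !mxE.
by case: i0 => [[|[|[|i0]]] Hi] //; case: j0 => [[|[|[|j0]]] Hj].
Qed.

Lemma vec_row x y z a b c :
  vec3 x y z *m row3 a b c = mx3 (x*a) (x*b) (x*c) (y*a) (y*b) (y*c) (z*a) (z*b) (z*c).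
Proof.
apply/matrixP => i0 j0; rewrite !mxE big_ord1 !mxE.
by case: i0 => [[|[|[|i0]]] Hi] //; case: j0 => [[|[|[|j0]]] Hj].
Qed.

Lemma vec3_add (x y z x' y' z' : C) : vec3 x y z + vec3 x' y' z' = vec3 (x+x') (y+y') (z+z').
Proof. apply/matrixP => i0 j0; rewrite !mxE. by case: i0 => [[|[|[|i0]]] Hi]. Qed.

Lemma vec3_scale (k x y z : C) : k *: vec3 x y z = vec3 (k*x) (k*y) (k*z).
Proof. apply/matrixP => i0 j0; rewrite !mxE. by case: i0 => [[|[|[|i0]]] Hi]. Qed.

Lemma mx3_mulv a b c d e f g h i x y z :
  mx3 a b c d e f g h i *m vec3 x y z = vec3 (a*x+b*y+c*z) (d*x+e*y+f*z) (g*x+h*y+i*z).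
Proof.
apply/matrixP => i0 j0; rewrite !mxE !big_ord_recr big_ord0 /= !mxE.
case: i0 => [[|[|[|i0]]] Hi] //=; ring.
Qed.

Lemma mx3_cols a b c d e f g h i :
  mx3 a b c d e f g h i = vec3 a d g *m row3 1 0 0 + vec3 b e h *m row3 0 1 0
    + vec3 c f i *m row3 0 0 1.
Proof.
rewrite !vec_row !mx3_add; congr mx3; ring.
Qed.

Lemma mx3_scale k a b c d e f g h i :
  k *: mx3 a b c d e f g h i = mx3 (k*a) (k*b) (k*c) (k*d) (k*e) (k*f) (k*g) (k*h) (k*i).
Proof.
apply/matrixP => i0 j0; rewrite !mxE.
by case: i0 => [[|[|[|i0]]] Hi] //; case: j0 => [[|[|[|j0]]] Hj].
Qed.

Lemma mx3_0 : (0 : 'M[C]_3) = mx3 0 0 0 0 0 0 0 0 0.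
Proof.
apply/matrixP => i0 j0; rewrite !mxE.
by case: i0 => [[|[|[|i0]]] Hi] //; case: j0 => [[|[|[|j0]]] Hj].
Qed.

Lemma mx3_1 : (1 : 'M[C]_3) = mx3 1 0 0 0 1 0 0 0 1.
Proof. exact: mx3_scalar. Qed.

Lemma row_mx3 x y z a b c d e f g h i :
  row3 x y z *m mx3 a b c d e f g h i = row3 (x*a+y*d+z*g) (x*b+y*e+z*h) (x*c+y*f+z*i).
Proof.
apply/matrixP => i0 j0; rewrite !mxE !big_ord_recr big_ord0 /= !mxE.
case: j0 => [[|[|[|j0]]] Hj] //=; ring.
Qed.

Lemma row3_scale (k x y z : C) : k *: row3 x y z = row3 (k*x) (k*y) (k*z).
Proof. apply/matrixP => i0 j0; rewrite !mxE. by case: j0 => [[|[|[|j0]]] Hj]. Qed.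

Lemma row3_neq0 (x y z : C) : y != 0 -> row3 x y z != 0.
Proof.
move=> hy; apply/eqP => h; have := congr1 (fun M : 'rV[C]_3 => M 0 1) h.
by rewrite !mxE /=; apply/eqP.
Qed.

Lemma row3_neq0' (x y z : C) : z != 0 -> row3 x y z != 0.
Proof.
move=> hy; apply/eqP => h; have := congr1 (fun M : 'rV[C]_3 => M 0 2) h.
by rewrite !mxE /=; apply/eqP.
Qed.

End MX3.

Ltac mx3_simpl := rewrite ?mx3_scalar ?mx3_1 -?mulmxE ?mx3_mul ?mx3_scale ?mx3_opp ?mx3_add ?mx3_mul ?mx3_opp ?mx3_add.



Section Ord.
Variable C : numClosedFieldType.

Lemma quad_mx (T : 'M[C]_3) (x y : C) :
  (T - x%:M) * (T - y%:M) = T * T - (x + y) *: T + (x * y)%:M.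
Proof.
rewrite mulrBl !mulrBr -!mulmxE mul_mx_scalar mul_scalar_mx -scalar_mxM.
rewrite scalerDl; set u := x *: T; set v := y *: T.
rewrite opprB opprD !addrA addrAC; congr (_ + _); exact: addrAC.
Qed.

Lemma order_mx3 (z : C) (p : nat) u1 u2 a b c d :
 (2 < p)%N -> p.-primitive_root z ->
 a + d = z + z^-1 -> a*d - b*c = 1 -> has_order (mx3 1 u1 u2 0 a b 0 c d) p.
Proof.
move=> hp pz htr hdet.
set T := mx3 1 u1 u2 0 a b 0 c d.
have zp : z ^+ p = 1 := prim_expr_order pz.
have z0 : z != 0 by rewrite (prim_root_eq0 pz) -lt0n (ltn_trans _ hp).
have z1 : z != 1.
  apply/eqP => hz1; move: (prim_order_dvd pz 1); rewrite hz1 expr1 eqxx.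
  by move/dvdn_leq => /(_ isT); rewrite leqNgt (ltn_trans _ hp).
have zz : z != z^-1.
  apply/eqP => hzz; move: (prim_order_dvd pz 2).
  rewrite expr2 {2}hzz mulfV // eqxx => /dvdn_leq => /(_ isT); by rewrite leqNgt hp.
have z1' : z^-1 != 1 by rewrite invr_eq1.
split; first exact: (ltn_trans _ hp).
split.
-
  have hP : (T - 1%:M) * ((T - z%:M) * (T - z^-1%:M)) = 0.
    have h0 : (T - 1%:M) * (T * T - (a + d) *: T + (a*d - b*c)%:M) = 0.
      rewrite /T; mx3_simpl; rewrite mx3_0; congr mx3; ring.
    rewrite quad_mx -htr mulfV //; rewrite hdet in h0; exact: h0.
  pose P := ('X - 1%:P) * (('X - z%:P) * ('X - (z^-1)%:P)) : {poly C}.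
  have hdiv : P %| 'X^p - 1.
    have := @uniq_roots_dvdp _ ('X^p - 1) [:: 1; z; z^-1].
    rewrite !big_cons big_nil mulr1; apply.
    - rewrite /= !rootE !hornerE expr1n zp exprVn zp invr1 subrr eqxx.
      done.
    - rewrite uniq_rootsE /= !inE negb_or eq_sym z1 eq_sym z1' zz.
      done.
  have [q hq] := dvdpP _ _ hdiv.
  have := congr1 (horner_mx T) hq.
  rewrite rmorphM /= !rmorphM !rmorphB /= horner_mx_X !horner_mx_C rmorphXn /= horner_mx_X.
  rewrite hP mulr0 rmorph1 => /eqP; rewrite subr_eq0 => /eqP.
  done.
- move=> k /andP[k0 kp] hTk.
  have zi : z * z^-1 = 1 by rewrite mulfV.
  have hd : d = z + z^-1 - a by rewrite -htr; ring.
  have hbc : b * c = a * (z + z^-1 - a) - 1 by rewrite -hd -hdet; ring.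
  have [v [v0 hv]] : exists v : 'rV[C]_3, v != 0 /\ v *m T = z *: v.
    case: (boolP ((c == 0) && (z == a))) => [/andP[/eqP c0 /eqP za] | hcz].
    + exists (row3 0 (z - d) b); split.
        apply: row3_neq0; rewrite hd -za (_ : z - (z + z^-1 - z) = z - z^-1); last by ring.
        by rewrite subr_eq0.
      rewrite /T row_mx3 row3_scale; congr row3; rewrite ?c0 -?za ?hd; try ring.
    + exists (row3 0 c (z - a)); split.
        move: hcz; rewrite negb_and; case/orP => h.
          exact: row3_neq0.
        by apply: row3_neq0'; rewrite subr_eq0.
      rewrite /T row_mx3 row3_scale; congr row3; try ring.
      rewrite (mulrC c b) hbc hd.
      have : z * z^-1 = 1 by [].
      move: (z^-1) => zi' hzi; rewrite -hzi; ring.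
  have hvj : forall j, v *m T ^+ j = z ^+ j *: v.
    elim=> [|j IH]; first by rewrite expr0 scale1r mulmx1.
    by rewrite exprSr -mulmxE mulmxA IH -scalemxAl hv scalerA exprSr.
  have := hvj k; rewrite hTk mulmx1 => /eqP; rewrite -subr_eq0 -{1}(scale1r v) -scalerBl.
  rewrite scaler_eq0 (negbTE v0) orbF subr_eq0 eq_sym -(prim_order_dvd pz) => /dvdn_leq.
  by move=> /(_ k0); rewrite leqNgt kp.
Qed.
End Ord.


Section Main.
Variable C : numClosedFieldType.

Lemma order_mx3' (z : C) (p : nat) x00 x10 x20 u1 u2 a b c d :
 (2 < p)%N -> p.-primitive_root z -> x00 = 1 -> x10 = 0 -> x20 = 0 ->
 a + d = z + z^-1 -> a*d - b*c = 1 -> has_order (mx3 x00 u1 u2 x10 a b x20 c d) p.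
Proof. by move=> hp hz -> -> ->; apply: order_mx3. Qed.

Lemma conj_order (X Y B Bi : 'M[C]_3) p :
  X *m B = B *m Y -> B *m Bi = 1%:M -> Bi *m B = 1%:M -> has_order Y p -> has_order X p.
Proof.
rewrite !mulmxE => hXY hBBi hBiB [p0 [hYp hYk]].
have hX : X = B * Y * Bi by rewrite -hXY -mulrA hBBi mulr1.
have hXk : forall k, X ^+ k = B * Y ^+ k * Bi.
  elim=> [|k IH]; first by rewrite !expr0 mulr1 hBBi.
  by rewrite exprS IH hX -!mulrA (mulrA Bi) hBiB mul1r exprS !mulrA.
split => //; split; first by rewrite hXk hYp mulr1 hBBi.
move=> k hk hXk1; apply: (hYk k hk).
have : Bi * X ^+ k * B = Y ^+ k.
  by rewrite hXk !mulrA hBiB mul1r -mulrA hBiB mulr1.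
by rewrite hXk1 mulr1 hBiB => <-.
Qed.

Lemma chain (A1 A2 n1 n2 B S1 S2 U1 U2 : 'M[C]_3) :
  A1 *m B = B *m S1 -> A2 *m B = B *m S2 -> n1 *m B = B *m U1 -> n2 *m B = B *m U2 ->
  (A1 *m n1) *m (A2 *m n2) *m B = B *m (S1 *m U1 *m (S2 *m U2)).
Proof.
rewrite !mulmxE => h1 h2 h3 h4.
rewrite -!mulrA h4 (mulrA A2) h2 -!mulrA (mulrA n1) h3 -!mulrA (mulrA A1) h1 -!mulrA.
done.
Qed.

Lemma nuB (ga l m : C) (v : C * C) (nu : 'M_3) : corresponds ga l m nu v ->
  nu *m mx3 (4 - ga) 0 0 (l+2) 1 0 (m+2) 0 1 =
  mx3 (4 - ga) 0 0 (l+2) 1 0 (m+2) 0 1 *m mx3 1 v.1 v.2 0 1 0 0 0 1.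
Proof.
case=> h1 h2 h3.
rewrite [in LHS]mx3_cols !mulmxDr !mulmxA.
rewrite (_ : vec3 (4 - ga) (l+2) (m+2) = bvec ga l m) // h1.
rewrite (_ : vec3 0 1 0 = a2 C) // h2 (_ : vec3 0 0 1 = a3 C) // h3.
rewrite /bvec /a2 /a3 !vec3_scale !vec3_add !vec_row !mx3_add mx3_mul; congr mx3; ring.
Qed.


Lemma lin (E F P Q k : C) : P = Q -> E - F = k * (P - Q) -> E = F.
Proof. by move=> -> h; apply/eqP; rewrite -subr_eq0 h subrr mulr0. Qed.

Definition Bm (ga l m : C) := mx3 (4 - ga) 0 0 (l+2) 1 0 (m+2) 0 1.
Definition Bi (ga l m : C) :=
  mx3 (1/(4 - ga)) 0 0 (-(l+2)/(4-ga)) 1 0 (-(m+2)/(4-ga)) 0 1.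

Lemma BBi ga l m : 4 - ga != 0 -> Bm ga l m *m Bi ga l m = 1%:M.
Proof. move=> hg; rewrite /Bm /Bi mx3_mul mx3_scalar; congr mx3; by field. Qed.
Lemma BiB ga l m : 4 - ga != 0 -> Bi ga l m *m Bm ga l m = 1%:M.
Proof. move=> hg; rewrite /Bm /Bi mx3_mul mx3_scalar; congr mx3; by field. Qed.

Lemma s1B (al be ga l m : C) : 4 - ga != 0 ->
  al * (l + 2) + be * (m + 2) = 2 * (4 - ga) ->
  refl1 al be *m Bm ga l m = Bm ga l m *m
   mx3 1 (al/(4-ga)) (be/(4-ga)) 0 (1 - al*(l+2)/(4-ga)) (- be*(l+2)/(4-ga))
       0 (- al*(m+2)/(4-ga)) (1 - be*(m+2)/(4-ga)).
Proof.
move=> hg hab.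
rewrite /refl1 /Bm /a1 vec_row mx3_scalar mx3_opp mx3_add !mx3_mul; congr mx3; try by field.
by apply: (lin (k := 1) hab); ring.
Qed.

Lemma s2B (ga l m : C) : l * m = ga ->
  refl2 l *m Bm ga l m = Bm ga l m *m mx3 1 0 0 0 (-1) l 0 0 1.
Proof.
move=> hlm.
rewrite /refl2 /Bm /a2 vec_row mx3_scalar mx3_opp mx3_add !mx3_mul -hlm; congr mx3; ring.
Qed.

Lemma s3B (ga l m : C) : l * m = ga ->
  refl3 m *m Bm ga l m = Bm ga l m *m mx3 1 0 0 0 1 0 0 m (-1).
Proof.
move=> hlm.
rewrite /refl3 /Bm /a3 vec_row mx3_scalar mx3_opp mx3_add !mx3_mul -hlm; congr mx3; ring.
Qed.



Lemma pair12 (al be ga l m z : C) (p : nat) (v1 v2 : C * C) (nu1 nu2 : 'M[C]_3) :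
 (2 < p)%N -> p.-primitive_root z -> al = z + z^-1 + 2 ->
 4 - ga != 0 -> l * m = ga -> al * (l + 2) + be * (m + 2) = 2 * (4 - ga) ->
 corresponds ga l m nu1 v1 -> corresponds ga l m nu2 v2 ->
 has_order ((refl1 al be *m nu1) *m (refl2 l *m nu2)) p.
Proof.
move=> hp hz hal hg hlm hab c1 c2.
apply: (conj_order (B := Bm ga l m) (Bi := Bi ga l m)).
- apply: chain; [exact: s1B | exact: s2B | exact: nuB c1 | exact: nuB c2].
- exact: BBi.
- exact: BiB.
rewrite !mx3_mul.
have hzz : z + z^-1 = al - 2 by rewrite hal; ring.
rewrite -hlm in hg hab.

apply: (@order_mx3' z p) => //; rewrite ?hzz -?hlm.
- by field.
- by field.
- by field.
- apply: (lin (k := -1/(4 - l * m)) hab); by field.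
- apply: (lin (k := 1/(4 - l * m)) hab); by field.
Qed.


Lemma pair13 (al be ga l m z : C) (p : nat) (v1 v2 : C * C) (nu1 nu2 : 'M[C]_3) :
 (2 < p)%N -> p.-primitive_root z -> be = z + z^-1 + 2 ->
 4 - ga != 0 -> l * m = ga -> al * (l + 2) + be * (m + 2) = 2 * (4 - ga) ->
 corresponds ga l m nu1 v1 -> corresponds ga l m nu2 v2 ->
 has_order ((refl1 al be *m nu1) *m (refl3 m *m nu2)) p.
Proof.
move=> hp hz hbe hg hlm hab c1 c2.
apply: (conj_order (B := Bm ga l m) (Bi := Bi ga l m)).
- apply: chain; [exact: s1B | exact: s3B | exact: nuB c1 | exact: nuB c2].
- exact: BBi.
- exact: BiB.
rewrite !mx3_mul.
have hzz : z + z^-1 = be - 2 by rewrite hbe; ring.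
rewrite -hlm in hg hab.
apply: (@order_mx3' z p) => //; rewrite ?hzz -?hlm.
- by field.
- by field.
- by field.
- apply: (lin (k := -1/(4 - l * m)) hab); by field.
- apply: (lin (k := 1/(4 - l * m)) hab); by field.
Qed.

Lemma pair23 (ga l m z : C) (p : nat) (v1 v2 : C * C) (nu1 nu2 : 'M[C]_3) :
 (2 < p)%N -> p.-primitive_root z -> ga = z + z^-1 + 2 ->
 4 - ga != 0 -> l * m = ga ->
 corresponds ga l m nu1 v1 -> corresponds ga l m nu2 v2 ->
 has_order ((refl2 l *m nu1) *m (refl3 m *m nu2)) p.
Proof.
move=> hp hz hga hg hlm c1 c2.
apply: (conj_order (B := Bm ga l m) (Bi := Bi ga l m)).
- apply: chain; [exact: s2B | exact: s3B | exact: nuB c1 | exact: nuB c2].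
- exact: BBi.
- exact: BiB.
rewrite !mx3_mul.
have hzz : z + z^-1 = ga - 2 by rewrite hga; ring.
apply: (@order_mx3' z p) => //; rewrite ?hzz -?hlm; ring.
Qed.

End Main.

Lemma cos_root (C : numClosedFieldType) (k p : nat) : (2 < p)%N -> coprime k p ->
  exists2 z : C, p.-primitive_root z & four_cos2 C k p = z + z^-1 + 2.
Proof.
move=> hp hk.
have p1 : (1 < p)%N by apply: ltn_trans hp.
have pw := rootN1_prim C p1.
set w := p.-root (-1 : C) in pw *.
have p2 : p.-primitive_root (w ^+ 2).
  have := dvdn_prim_root pw (dvdn_mull 2 (dvdnn p)).
  by rewrite mulnK // (ltn_trans _ hp).
exists ((w ^+ 2) ^+ k); first by rewrite prim_root_exp_coprime.
have w0 : w != 0 by rewrite (prim_root_eq0 pw) muln_eq0 negb_or /= -lt0n (ltn_trans _ hp).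
have u0 : w ^+ k != 0 by rewrite expf_neq0.
rewrite /four_cos2 -/w -exprM mulnC exprM.
move: (w ^+ k) u0 => u u0; by field.
Qed.

Theorem corollary1 (C : numClosedFieldType) (p q r k1 k2 k3 : nat)
  (hp : (3 <= p)%N) (hq : (3 <= q)%N) (hr : (3 <= r)%N)
  (hk1 : coprime k1 p) (hk2 : coprime k2 q) (hk3 : coprime k3 r)
  (l m : C) :
  let alpha := four_cos2 C k1 p in
  let beta := four_cos2 C k2 q in
  let gamma := four_cos2 C k3 r in
  l * m = gamma ->
  Delta alpha beta gamma l m = 0 ->
  forall (lam1 lam2 lam3 : C) (nu1 nu2 nu3 : 'M[C]_3),
  in_N alpha beta gamma l m nu1 (scal2 lam1 (alpha, beta)) ->
  in_N alpha beta gamma l m nu2 (scal2 lam2 (-2, l)) ->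
  in_N alpha beta gamma l m nu3 (scal2 lam3 (m, -2)) ->
  let s1' := refl1 alpha beta *m nu1 in
  let s2' := refl2 l *m nu2 in
  let s3' := refl3 m *m nu3 in
  [/\ has_order (s1' *m s2') p, has_order (s1' *m s3') q & has_order (s2' *m s3') r].
Proof.
move=> alpha beta gamma hlm hD lam1 lam2 lam3 nu1 nu2 nu3 [_ c1] [_ c2] [_ c3] s1' s2' s3'.
have [z1 pz1 ha] := cos_root C hp hk1.
have [z2 pz2 hb] := cos_root C hq hk2.
have [z3 pz3 hc] := cos_root C hr hk3.
have hg : 4 - gamma != 0.
  apply/eqP => h.
  have z30 : z3 != 0 by rewrite (prim_root_eq0 pz3) -lt0n (ltn_trans _ hr).
  have e : (z3 - 1) ^+ 2 = - z3 * (4 - (z3 + z3^-1 + 2)) by field.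
  rewrite -hc h mulr0 in e; move/eqP: e; rewrite expf_eq0 /= subr_eq0 => /eqP e.
  move: (prim_order_dvd pz3 1); rewrite expr1 e eqxx => /dvdn_leq => /(_ isT).
  by rewrite leqNgt (ltn_trans _ hr).
have hab : alpha * (l + 2) + beta * (m + 2) = 2 * (4 - gamma).
  by apply: (lin (k := -1) hD); rewrite /Delta; ring.
split.
- exact: (pair12 hp pz1 ha hg hlm hab c1 c2).
- exact: (pair13 hq pz2 hb hg hlm hab c1 c3).
- exact: (pair23 hr pz3 hc hg hlm c2 c3).
Qed.
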